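(* Let $\Omega\subset\mathbb{R}^2$ be open and $\gamma:\Omega\to\mathbb{R}^2$ a smooth map satisfying $\gamma_{,tt}=\gamma_{,ss}$, $\langle\gamma_{,t},\gamma_{,s}\rangle = 0$ and $|\gamma_{,t}|^2+|\gamma_{,s}|^2=1$, and let $\mathcal{S}$ be the ``timelike maximal'' surface $\{(t,\gamma(t,s))\}\subset\mathbb{R}^{1+2}$. Suppose $(t_0,s_0)\in\Omega$ satisfies $\gamma_{,s}(t_0,s_0)=0$ and $\gamma_{,ts}(t_0,s_0)\neq0$. Then locally around $(t_0,s_0)$ the singularities of $\mathcal{S}$ (the points where $\gamma_{,s}=0$) lie along the null curve $s\mapsto(T(s),\gamma(T(s),s))$, where $T$ solves \[ T'(s) = -\frac{\langle\gamma_{,ss}(T(s),s),\gamma_{,ts}(T(s),s)\rangle}{|\gamma_{,ts}(T(s),s)|^2},\qquad T(s_0)=t_0. \] Furthermore, if $\gamma_{,ss}(t_0,s_0)=0$ and $\gamma_{,sss}(t_0,s_0)\neq0$, then these singularities are cusps (except possibly $\gamma(t_0,s_0)$), and the curve $s\mapsto(T(s),\gamma(T(s),s))$ lies entirely in the past of $t_0$ if $\langle\gamma_{,sss},\gamma_{,ts}\rangle(t_0,s_0)>0$ and entirely in the future if $\langle\gamma_{,sss},\gamma_{,ts}\rangle(t_0,s_0)<0$, and it splits into two null curves which join together at $(t_0,\gamma(t_0,s_0))$ as a cusp.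
   Context: $\mathbb{R}^{1+2}$ is Minkowski space with metric $-dt^2+|dx|^2$; subscripts after commas denote partial derivatives; $\langle\cdot,\cdot\rangle$ is the Euclidean inner product on $\mathbb{R}^2$. *)

(* Defs.v *)
From Stdlib Require Import Reals List.
From Coquelicot Require Import Coquelicot.
Open Scope R_scope.

Inductive pdir := Dt | Ds.

(* Iterated partial derivative of a scalar function f(t,s):
   pd (d1 :: d2 :: ... :: dk :: nil) f = d_{d1} d_{d2} ... d_{dk} f. *)
Fixpoint pd (w : list pdir) (f : R -> R -> R) {struct w} : R -> R -> R :=
  match w with
  | nil => f
  | Dt :: w' => fun t s => Derive (fun u => pd w' f u s) t
  | Ds :: w' => fun t s => Derive (fun u => pd w' f t u) s
  end.

Definition smooth_on (Om : R * R -> Prop) (f : R -> R -> R) : Prop :=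
  forall (w : list pdir) (t s : R), Om (t, s) ->
    ex_derive (fun u => pd w f u s) t /\
    ex_derive (fun u => pd w f t u) s /\
    continuous (fun p : R * R => pd w f (fst p) (snd p)) (t, s).

Definition gam1 (g : R -> R -> R * R) : R -> R -> R := fun t s => fst (g t s).
Definition gam2 (g : R -> R -> R * R) : R -> R -> R := fun t s => snd (g t s).

Definition smooth_map (Om : R * R -> Prop) (g : R -> R -> R * R) : Prop :=
  smooth_on Om (gam1 g) /\ smooth_on Om (gam2 g).

Definition pdv (w : list pdir) (g : R -> R -> R * R) (t s : R) : R * R :=
  (pd w (gam1 g) t s, pd w (gam2 g) t s).

Definition ip (u v : R * R) : R := fst u * fst v + snd u * snd v.
Definition nrm2 (u : R * R) : R := ip u u.
Definition det2 (u v : R * R) : R := fst u * snd v - snd u * fst v.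

Definition singular (g : R -> R -> R * R) (t s : R) : Prop :=
  pdv (Ds :: nil) g t s = (0, 0).

(* Components of the space-time curve s |-> (T(s), gamma(T(s), s)) in R^{1+2}. *)
Definition crv0 (T : R -> R) : R -> R := T.
Definition crv1 (T : R -> R) (g : R -> R -> R * R) : R -> R := fun u => fst (g (T u) u).
Definition crv2 (T : R -> R) (g : R -> R -> R * R) : R -> R := fun u => snd (g (T u) u).

Definition null_at (T : R -> R) (g : R -> R -> R * R) (s : R) : Prop :=
  - (Derive (crv0 T) s) ^ 2 + (Derive (crv1 T g) s) ^ 2 + (Derive (crv2 T g) s) ^ 2 = 0.

(* The time-slice curve sigma |-> gamma(t, sigma) has an ordinary (A2) cusp
   at sigma = s: it is singular there and gamma_ss, gamma_sss are linearly
   independent. *)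
Definition plane_cusp (g : R -> R -> R * R) (t s : R) : Prop :=
  singular g t s /\
  det2 (pdv (Ds :: Ds :: nil) g t s) (pdv (Ds :: Ds :: Ds :: nil) g t s) <> 0.

(* The space-time curve c(s) = (T(s), gamma(T(s), s)) has an ordinary cusp at
   s = s0: c'(s0) = 0 and c''(s0), c'''(s0) are linearly independent in R^3. *)
Definition spacetime_cusp (T : R -> R) (g : R -> R -> R * R) (s0 : R) : Prop :=
  Derive (crv0 T) s0 = 0 /\ Derive (crv1 T g) s0 = 0 /\ Derive (crv2 T g) s0 = 0 /\
  forall a b : R,
    a * Derive_n (crv0 T) 2 s0 + b * Derive_n (crv0 T) 3 s0 = 0 ->
    a * Derive_n (crv1 T g) 2 s0 + b * Derive_n (crv1 T g) 3 s0 = 0 ->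
    a * Derive_n (crv2 T g) 2 s0 + b * Derive_n (crv2 T g) 3 s0 = 0 ->
    a = 0 /\ b = 0.

(* Main.v *)
Require Import Defs.
From Stdlib Require Import Reals List Lra Psatz ClassicalEpsilon Ranalysis5.
From Coquelicot Require Import Coquelicot.
Open Scope R_scope.

Definition dt (F : R -> R -> R) : R -> R -> R := fun t s => Derive (fun z => F z s) t.
Definition ds (F : R -> R -> R) : R -> R -> R := fun t s => Derive (fun z => F t z) s.

Definition Cn (V : R * R -> Prop) (n : nat) (F : R -> R -> R) :=
  forall t s, V (t, s) -> ex_diff_n F n t s.
Definition Cinf V F := forall n, Cn V n F.

Lemma open_loc2d (V : R * R -> Prop) t s : open V -> V (t, s) ->
  locally_2d (fun u v => V (u, v)) t s.
Proof.
  intros HV H. apply locally_2d_locally. specialize (HV _ H).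
  eapply filter_imp; [|exact HV]. intros [a b] Hz; exact Hz.
Qed.

Lemma DL1_diff (F : R -> R -> R) x y :
  locally_2d (fun u v => ex_diff_n F 2 u v) x y ->
  differentiable_pt_lim F x y (dt F x y) (ds F x y).
Proof.
  intros H. destruct (Taylor_Lagrange_2d F 1 x y H) as [D HD].
  unfold DL_pol, differential in HD. simpl in HD. unfold partial_derive in HD. simpl in HD.
  replace (Binomial.C 0 0) with 1 in HD by (unfold Binomial.C; simpl; field). replace (Binomial.C 1 0) with 1 in HD by (unfold Binomial.C; simpl; field). replace (Binomial.C 1 1) with 1 in HD by (unfold Binomial.C; simpl; field).
  intros eps. destruct HD as [d Hd].
  set (D' := Rmax D 1).
  assert (HD' : 0 < D') by (unfold D'; generalize (Rmax_r D 1); lra).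
  assert (Hp : 0 < Rmin d (eps / D')).
  { apply Rmin_pos. apply cond_pos. apply Rdiv_lt_0_compat. apply cond_pos. lra. }
  exists (mkposreal _ Hp). intros u v Hu Hv. simpl in Hu, Hv.
  assert (Hu1 := Rlt_le_trans _ _ _ Hu (Rmin_l _ _)).
  assert (Hv1 := Rlt_le_trans _ _ _ Hv (Rmin_l _ _)).
  assert (Hu2 := Rlt_le_trans _ _ _ Hu (Rmin_r _ _)).
  assert (Hv2 := Rlt_le_trans _ _ _ Hv (Rmin_r _ _)).
  specialize (Hd u v Hu1 Hv1).
  set (M := Rmax (Rabs (u - x)) (Rabs (v - y))) in *.
  assert (HM0 : 0 <= M) by (unfold M; generalize (Rmax_l (Rabs (u - x)) (Rabs (v - y))) (Rabs_pos (u-x)); lra).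
  assert (HM : M <= eps / D') by (unfold M; apply Rmax_lub; lra).
  assert (HDD : D <= D') by apply Rmax_l.
  unfold dt, ds.
  replace (F u v - F x y - (Derive (fun z : R => F z y) x * (u - x) + Derive (fun z : R => F x z) y * (v - y)))
    with (F u v - (1 * F x y * 1 * 1 / 1 + (1 * Derive (fun x0 : R => F x x0) y * 1 * ((v - y) * 1) +
            1 * Derive (fun x : R => F x y) x * ((u - x) * 1) * 1) / 1)) by field.
  eapply Rle_trans; [exact Hd|].
  assert (D * (M * (M * 1)) <= D' * (M * M)) by (rewrite Rmult_1_r; apply Rmult_le_compat_r; nra).
  assert (D' * (M * M) <= eps * M).
  { assert (D' * M <= eps). { apply (Rmult_le_compat_l D') in HM; [|lra].
      unfold Rdiv in HM. rewrite <- Rmult_assoc, (Rmult_comm D' eps), Rmult_assoc, Rinv_r, Rmult_1_r in HM; lra. }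
    nra. }
  lra.
Qed.

Lemma l2d_imp (P Q : R -> R -> Prop) x y :
  (forall u v, P u v -> Q u v) -> locally_2d P x y -> locally_2d Q x y.
Proof. intros H [d Hd]. exists d. intros; apply H, Hd; auto. Qed.

Lemma exd_dt F n t s : ex_diff_n F (S n) t s -> ex_derive (fun z => F z s) t.
Proof. intros [_ [H _]]. exact H. Qed.
Lemma exd_ds F n t s : ex_diff_n F (S n) t s -> ex_derive (fun z => F t z) s.
Proof. intros [_ [_ [H _]]]. exact H. Qed.
Lemma exd_cont F n t s : ex_diff_n F n t s -> continuity_2d_pt F t s.
Proof. destruct n; intros [H _]; exact H. Qed.

Lemma Cn_ext V n F G : open V -> Cn V n F ->
  (forall t s, V (t, s) -> F t s = G t s) -> Cn V n G.
Proof.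
  intros HV HF E t s Hts. apply (ex_diff_n_ext_loc F G); [|now apply HF].
  eapply l2d_imp; [|apply (open_loc2d V t s HV Hts)]. intros u v; apply E.
Qed.

Lemma Cn_le V n m F : (m <= n)%nat -> Cn V n F -> Cn V m F.
Proof. intros Hl H t s Hts. apply (ex_diff_n_m n m Hl), H, Hts. Qed.

Lemma Cn_dt V n F : Cn V (S n) F -> Cn V n (dt F).
Proof. intros H t s Hts. apply ex_diff_n_deriv_aux1, H, Hts. Qed.
Lemma Cn_ds V n F : Cn V (S n) F -> Cn V n (ds F).
Proof. intros H t s Hts. apply ex_diff_n_deriv_aux2, H, Hts. Qed.

Lemma exd_const n : forall c x y, ex_diff_n (fun _ _ => c) n x y.
Proof.
  induction n; intros c x y; simpl.
  - split; [apply continuity_2d_pt_const|exact I].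
  - repeat split; [apply continuity_2d_pt_const|apply ex_derive_const|apply ex_derive_const| |].
    + apply (ex_diff_n_ext_loc (fun _ _ => 0)); [|apply IHn].
      exists (mkposreal 1 Rlt_0_1). intros; symmetry; apply Derive_const.
    + apply (ex_diff_n_ext_loc (fun _ _ => 0)); [|apply IHn].
      exists (mkposreal 1 Rlt_0_1). intros; symmetry; apply Derive_const.
Qed.

Lemma exd_id1 n x y : ex_diff_n (fun u _ => u) n x y.
Proof.
  destruct n; simpl.
  - split; [apply continuity_2d_pt_id1|exact I].
  - repeat split; [apply continuity_2d_pt_id1|apply ex_derive_id|apply ex_derive_const| |].
    + apply (ex_diff_n_ext_loc (fun _ _ => 1)); [|apply exd_const].
      exists (mkposreal 1 Rlt_0_1). intros; symmetry; apply Derive_id.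
    + apply (ex_diff_n_ext_loc (fun _ _ => 0)); [|apply exd_const].
      exists (mkposreal 1 Rlt_0_1). intros; symmetry; apply Derive_const.
Qed.

Lemma exd_id2 n x y : ex_diff_n (fun _ v => v) n x y.
Proof.
  destruct n; simpl.
  - split; [apply continuity_2d_pt_id2|exact I].
  - repeat split; [apply continuity_2d_pt_id2|apply ex_derive_const|apply ex_derive_id| |].
    + apply (ex_diff_n_ext_loc (fun _ _ => 0)); [|apply exd_const].
      exists (mkposreal 1 Rlt_0_1). intros; symmetry; apply Derive_const.
    + apply (ex_diff_n_ext_loc (fun _ _ => 1)); [|apply exd_const].
      exists (mkposreal 1 Rlt_0_1). intros; symmetry; apply Derive_id.
Qed.

Lemma Cn_const V n c : Cn V n (fun _ _ => c).
Proof. intros t s _; apply exd_const. Qed.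
Lemma Cn_id1 V n : Cn V n (fun u _ => u).
Proof. intros t s _; apply exd_id1. Qed.
Lemma Cn_id2 V n : Cn V n (fun _ v => v).
Proof. intros t s _; apply exd_id2. Qed.

Lemma Cn_plus V (HV : open V) n : forall F G, Cn V n F -> Cn V n G ->
  Cn V n (fun t s => F t s + G t s).
Proof.
  induction n; intros F G HF HG t s Hts.
  - split; [|exact I]. apply continuity_2d_pt_plus; eapply exd_cont; [apply HF|apply HG]; auto.
  - specialize (HF t s Hts) as HF0. specialize (HG t s Hts) as HG0.
    repeat split.
    + apply continuity_2d_pt_plus; eapply exd_cont; eauto.
    + apply (ex_derive_plus (fun z => F z s) (fun z => G z s)); eapply exd_dt; eauto.
    + apply (ex_derive_plus (fun z => F t z) (fun z => G t z)); eapply exd_ds; eauto.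
    + apply (Cn_ext V n (fun u v => dt F u v + dt G u v)); auto.
      * apply IHn; apply Cn_dt; auto.
      * intros u v Huv. unfold dt. symmetry.
        apply (Derive_plus (fun z => F z v) (fun z => G z v)); eapply exd_dt; eauto.
    + apply (Cn_ext V n (fun u v => ds F u v + ds G u v)); auto.
      * apply IHn; apply Cn_ds; auto.
      * intros u v Huv. unfold ds. symmetry.
        apply (Derive_plus (fun z => F u z) (fun z => G u z)); eapply exd_ds; eauto.
Qed.

Lemma Cn_mult V (HV : open V) n : forall F G, Cn V n F -> Cn V n G ->
  Cn V n (fun t s => F t s * G t s).
Proof.
  induction n; intros F G HF HG t s Hts.
  - split; [|exact I]. apply continuity_2d_pt_mult; eapply exd_cont; [apply HF|apply HG]; auto.
  - specialize (HF t s Hts) as HF0. specialize (HG t s Hts) as HG0.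
    repeat split.
    + apply continuity_2d_pt_mult; eapply exd_cont; eauto.
    + apply (ex_derive_mult (fun z => F z s) (fun z => G z s)); eapply exd_dt; eauto.
    + apply (ex_derive_mult (fun z => F t z) (fun z => G t z)); eapply exd_ds; eauto.
    + apply (Cn_ext V n (fun u v => dt F u v * G u v + F u v * dt G u v)); auto.
      * apply Cn_plus; auto; apply IHn; try (apply Cn_dt; auto); apply (Cn_le V (S n)); auto.
      * intros u v Huv. unfold dt. symmetry.
        apply (Derive_mult (fun z => F z v) (fun z => G z v)); eapply exd_dt; eauto.
    + apply (Cn_ext V n (fun u v => ds F u v * G u v + F u v * ds G u v)); auto.
      * apply Cn_plus; auto; apply IHn; try (apply Cn_ds; auto); apply (Cn_le V (S n)); auto.
      * intros u v Huv. unfold ds. symmetry.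
        apply (Derive_mult (fun z => F u z) (fun z => G u z)); eapply exd_ds; eauto.
Qed.

Lemma Cn_inv V (HV : open V) n : forall F, Cn V n F -> (forall t s, V (t, s) -> F t s <> 0) ->
  Cn V n (fun t s => / F t s).
Proof.
  induction n; intros F HF Hnz t s Hts.
  - split; [|exact I]. apply continuity_2d_pt_inv; auto. eapply exd_cont; apply HF; auto.
  - specialize (HF t s Hts) as HF0.
    repeat split.
    + apply continuity_2d_pt_inv; auto. eapply exd_cont; eauto.
    + apply (ex_derive_inv (fun z => F z s)); auto; eapply exd_dt; eauto.
    + apply (ex_derive_inv (fun z => F t z)); auto; eapply exd_ds; eauto.
    + apply (Cn_ext V n (fun u v => (-1 * dt F u v) * (/ F u v * / F u v))); auto.
      * apply Cn_mult; auto. apply Cn_mult; auto. apply Cn_const. apply Cn_dt; auto.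
        apply Cn_mult; auto; apply IHn; auto; apply (Cn_le V (S n)); auto.
      * intros u v Huv. unfold dt.
        rewrite (Derive_inv (fun z => F z v)); auto. field. auto. eapply exd_dt; eauto.
    + apply (Cn_ext V n (fun u v => (-1 * ds F u v) * (/ F u v * / F u v))); auto.
      * apply Cn_mult; auto. apply Cn_mult; auto. apply Cn_const. apply Cn_ds; auto.
        apply Cn_mult; auto; apply IHn; auto; apply (Cn_le V (S n)); auto.
      * intros u v Huv. unfold ds.
        rewrite (Derive_inv (fun z => F u z)); auto. field. auto. eapply exd_ds; eauto.
Qed.

Lemma Cinf_plus V F G : open V -> Cinf V F -> Cinf V G -> Cinf V (fun t s => F t s + G t s).
Proof. intros; intro n; apply Cn_plus; auto. Qed.
Lemma Cinf_mult V F G : open V -> Cinf V F -> Cinf V G -> Cinf V (fun t s => F t s * G t s).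
Proof. intros; intro n; apply Cn_mult; auto. Qed.
Lemma Cinf_inv V F : open V -> Cinf V F -> (forall t s, V (t, s) -> F t s <> 0) ->
  Cinf V (fun t s => / F t s).
Proof. intros; intro n; apply Cn_inv; auto. Qed.
Lemma Cinf_const V c : Cinf V (fun _ _ => c).
Proof. intro n; apply Cn_const. Qed.
Lemma Cinf_id1 V : Cinf V (fun u _ => u).
Proof. intro n; apply Cn_id1. Qed.
Lemma Cinf_id2 V : Cinf V (fun _ v => v).
Proof. intro n; apply Cn_id2. Qed.
Lemma Cinf_dt V F : Cinf V F -> Cinf V (dt F).
Proof. intros H n; apply Cn_dt, H. Qed.
Lemma Cinf_ds V F : Cinf V F -> Cinf V (ds F).
Proof. intros H n; apply Cn_ds, H. Qed.
Lemma Cinf_ext V F G : open V -> Cinf V F -> (forall t s, V (t, s) -> F t s = G t s) -> Cinf V G.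
Proof. intros HV H E n; eapply Cn_ext; eauto. Qed.
Lemma Cinf_opp V F : open V -> Cinf V F -> Cinf V (fun t s => - F t s).
Proof.
  intros HV H. apply (Cinf_ext V (fun t s => -1 * F t s)); auto.
  apply Cinf_mult; auto; apply Cinf_const. intros; ring.
Qed.
Lemma Cinf_minus V F G : open V -> Cinf V F -> Cinf V G -> Cinf V (fun t s => F t s - G t s).
Proof. intros. apply Cinf_plus; auto. apply Cinf_opp; auto. Qed.
Lemma Cinf_sub V W F : (forall p, W p -> V p) -> Cinf V F -> Cinf W F.
Proof. intros HW H n t s Hts. apply H, HW, Hts. Qed.

Lemma chain V F T s l : open V -> Cn V 2 F -> V (T s, s) -> is_derive T s l ->
  is_derive (fun u => F (T u) u) s (dt F (T s) s * l + ds F (T s) s).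
Proof.
  intros HV HF Hs HT.
  assert (HD : differentiable_pt_lim F (T s) s (dt F (T s) s) (ds F (T s) s)).
  { apply DL1_diff. eapply l2d_imp; [|apply (open_loc2d V _ _ HV Hs)].
    intros u v Huv; apply HF, Huv. }
  apply is_derive_Reals. apply is_derive_Reals in HT.
  replace (dt F (T s) s * l + ds F (T s) s) with (dt F (T s) s * l + ds F (T s) s * 1) by ring.
  apply (derivable_pt_lim_comp_2d F T (fun t => t)); auto.
  apply derivable_pt_lim_id.
Qed.

Lemma incr_F V F r t0 s0 :
  (forall u v, Rabs (u - t0) < r -> Rabs (v - s0) < r -> V (u, v) /\ 0 < dt F u v) ->
  Cn V 1 F ->
  forall v x y, Rabs (v - s0) < r -> Rabs (x - t0) < r -> Rabs (y - t0) < r -> x < y ->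
  F x v < F y v.
Proof.
  intros Hr HF v x y Hv Hx Hy Hxy.
  apply (incr_function (fun z => F z v) (Finite (t0 - r)) (Finite (t0 + r)) (fun u => dt F u v));
    simpl; auto.
  - intros u H1 H2. assert (Hu : Rabs (u - t0) < r) by (apply Rabs_lt_between; lra).
    apply Derive_correct. eapply exd_dt. apply HF, Hr; auto.
  - intros u H1 H2. assert (Hu : Rabs (u - t0) < r) by (apply Rabs_lt_between; lra).
    apply Hr; auto.
  - apply Rabs_lt_between in Hx; lra.
  - apply Rabs_lt_between in Hy; lra.
Qed.

Lemma cont_pt_of_exd F n t s : ex_diff_n F (S n) t s -> continuity_pt (fun z => F z s) t.
Proof.
  intros H. apply continuity_pt_filterlim. apply (ex_derive_continuous (fun z => F z s)).
  eapply exd_dt; eauto.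
Qed.

Lemma ift_core V F t0 s0 : open V -> Cinf V F -> V (t0, s0) -> F t0 s0 = 0 -> 0 < dt F t0 s0 ->
  exists r eps (T : R -> R), 0 < r /\ 0 < eps /\ eps <= r /\
    (forall u v, Rabs (u - t0) < r -> Rabs (v - s0) < r -> V (u, v) /\ 0 < dt F u v) /\
    T s0 = t0 /\
    (forall s, Rabs (s - s0) < eps -> Rabs (T s - t0) < r / 2 /\ F (T s) s = 0) /\
    (forall t s, Rabs (t - t0) < r -> Rabs (s - s0) < eps -> F t s = 0 -> t = T s).
Proof.
  intros HV HF H0 HF0 Ha.
  set (a := dt F t0 s0) in *.
  assert (Hc : continuity_2d_pt (dt F) t0 s0).
  { apply (exd_cont _ 1). apply (Cn_dt V 1 F). apply HF. auto. }
  destruct (Hc (mkposreal (a / 2) ltac:(lra))) as [d1 Hd1].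
  destruct (open_loc2d V t0 s0 HV H0) as [d2 Hd2].
  set (r := Rmin d1 d2).
  assert (Hr0 : 0 < r) by (apply Rmin_pos; apply cond_pos).
  assert (Hr : forall u v, Rabs (u - t0) < r -> Rabs (v - s0) < r -> V (u, v) /\ 0 < dt F u v).
  { intros u v Hu Hv.
    assert (Hu1 := Rlt_le_trans _ _ _ Hu (Rmin_l _ _)).
    assert (Hv1 := Rlt_le_trans _ _ _ Hv (Rmin_l _ _)).
    assert (Hu2 := Rlt_le_trans _ _ _ Hu (Rmin_r _ _)).
    assert (Hv2 := Rlt_le_trans _ _ _ Hv (Rmin_r _ _)).
    split; [apply Hd2; auto|]. specialize (Hd1 u v Hu1 Hv1). simpl in Hd1.
    apply Rabs_lt_between in Hd1. unfold a in *. lra. }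
  assert (HF1 : Cn V 1 F) by apply HF.
  assert (Hinc := incr_F V F r t0 s0 Hr HF1).
  set (del := r / 2).
  assert (Hp : 0 < F (t0 + del) s0).
  { rewrite <- HF0. apply Hinc; rewrite ?Rminus_diag, ?Rabs_R0; auto; unfold del.
    replace (t0 + r/2 - t0) with (r/2) by ring. rewrite Rabs_pos_eq; lra. lra. }
  assert (Hm : F (t0 - del) s0 < 0).
  { rewrite <- HF0. apply Hinc; rewrite ?Rminus_diag, ?Rabs_R0; auto; unfold del.
    replace (t0 - r/2 - t0) with (-(r/2)) by ring. rewrite Rabs_Ropp, Rabs_pos_eq; lra. lra. }
  assert (Hcp : continuity_2d_pt F (t0 + del) s0).
  { apply (exd_cont _ 0). apply (Cn_le V 1 0); auto. apply Hr; auto.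
    replace (t0 + del - t0) with (r/2) by (unfold del; ring). rewrite Rabs_pos_eq; lra.
    rewrite Rminus_diag, Rabs_R0; auto. }
  assert (Hcm : continuity_2d_pt F (t0 - del) s0).
  { apply (exd_cont _ 0). apply (Cn_le V 1 0); auto. apply Hr; auto.
    replace (t0 - del - t0) with (-(r/2)) by (unfold del; ring). rewrite Rabs_Ropp, Rabs_pos_eq; lra.
    rewrite Rminus_diag, Rabs_R0; auto. }
  destruct (Hcp (mkposreal _ Hp)) as [e1 He1].
  destruct (Hcm (mkposreal (- F (t0 - del) s0) ltac:(lra))) as [e2 He2].
  set (eps := Rmin r (Rmin e1 e2)).
  assert (He0 : 0 < eps) by (apply Rmin_pos; auto; apply Rmin_pos; apply cond_pos).
  assert (Heps : forall s, Rabs (s - s0) < eps ->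
    Rabs (s - s0) < r /\ 0 < F (t0 + del) s /\ F (t0 - del) s < 0).
  { intros s Hs.
    assert (Hs1 := Rlt_le_trans _ _ _ Hs (Rmin_l _ _)).
    assert (Hs2 := Rlt_le_trans _ _ _ Hs (Rmin_r _ _)).
    assert (Hs3 := Rlt_le_trans _ _ _ Hs2 (Rmin_l _ _)).
    assert (Hs4 := Rlt_le_trans _ _ _ Hs2 (Rmin_r _ _)).

    specialize (He1 (t0 + del) s ltac:(rewrite Rminus_diag, Rabs_R0; apply cond_pos) Hs3).
    specialize (He2 (t0 - del) s ltac:(rewrite Rminus_diag, Rabs_R0; apply cond_pos) Hs4).
    simpl in He1, He2. apply Rabs_lt_between in He1. apply Rabs_lt_between in He2.
    repeat split; auto; lra. }
  set (P := fun s t => Rabs (t - t0) < del /\ F t s = 0).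
  set (T := fun s => epsilon (inhabits 0) (P s)).
  assert (HT : forall s, Rabs (s - s0) < eps -> P s (T s)).
  { intros s Hs. apply epsilon_spec. destruct (Heps s Hs) as [Hs1 [Hs2 Hs3]].
    destruct (IVT_interv (fun z => F z s) (t0 - del) (t0 + del)) as [z [Hz1 Hz2]]; auto.
    - intros z Hz. apply (cont_pt_of_exd F 0). apply HF1, Hr; auto.
      apply Rabs_lt_between. unfold del in Hz. lra.
    - unfold del; lra.
    - exists z. split; auto. apply Rabs_lt_between.
      destruct (Req_dec z (t0 - del)) as [E|E]; [subst z; simpl in Hz2; lra|].
      destruct (Req_dec z (t0 + del)) as [E'|E']; [subst z; simpl in Hz2; lra|].
      lra. }
  assert (Huniq : forall t s, Rabs (t - t0) < r -> Rabs (s - s0) < eps -> F t s = 0 -> t = T s).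
  { intros t s Ht Hs Hz. destruct (HT s Hs) as [H1 H2].
    destruct (Heps s Hs) as [Hs1 _].
    assert (H1' : Rabs (T s - t0) < r) by (unfold del in H1; lra).
    destruct (Rtotal_order t (T s)) as [Hl|[Hl|Hl]]; auto.
    - specialize (Hinc s t (T s) Hs1 Ht H1' Hl). lra.
    - specialize (Hinc s (T s) t Hs1 H1' Ht Hl). lra. }
  exists r, eps, T. repeat split; auto.
  - unfold eps; apply Rmin_l.
  - apply Hr; auto.
  - apply Hr; auto.
  - symmetry. apply Huniq; auto. rewrite Rminus_diag, Rabs_R0; auto.
    rewrite Rminus_diag, Rabs_R0; auto.
  - apply HT; auto.
  - apply HT; auto.
Qed.

Lemma ift_cont V F t0 s0 r eps (T : R -> R) :
  0 < r -> 0 < eps -> eps <= r ->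
  (forall u v, Rabs (u - t0) < r -> Rabs (v - s0) < r -> V (u, v) /\ 0 < dt F u v) ->
  Cn V 1 F ->
  (forall s, Rabs (s - s0) < eps -> Rabs (T s - t0) < r / 2 /\ F (T s) s = 0) ->
  forall s, Rabs (s - s0) < eps ->
  forall eta, 0 < eta -> exists d, 0 < d /\ forall h, Rabs h < d -> Rabs (T (s + h) - T s) < eta.
Proof.
  intros Hr0 He0 Her Hr HF1 HT s Hs eta Heta.
  assert (Hinc := incr_F V F r t0 s0 Hr HF1).
  set (e := Rmin eta (r / 2)).
  assert (He : 0 < e) by (apply Rmin_pos; lra).
  assert (He1 : e <= eta) by apply Rmin_l.
  assert (He2 : e <= r / 2) by apply Rmin_r.
  destruct (HT s Hs) as [HTs HFs].
  assert (Hsr : Rabs (s - s0) < r) by lra.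
  assert (Hxp : Rabs (T s + e - t0) < r) by (apply Rabs_lt_between in HTs; apply Rabs_lt_between; lra).
  assert (Hxm : Rabs (T s - e - t0) < r) by (apply Rabs_lt_between in HTs; apply Rabs_lt_between; lra).
  assert (HTr : Rabs (T s - t0) < r) by lra.
  assert (Hp : 0 < F (T s + e) s) by (rewrite <- HFs; apply Hinc; auto; lra).
  assert (Hm : F (T s - e) s < 0) by (rewrite <- HFs; apply Hinc; auto; lra).
  assert (Hcp : continuity_2d_pt F (T s + e) s) by (apply (exd_cont _ 1); apply HF1, Hr; auto).
  assert (Hcm : continuity_2d_pt F (T s - e) s) by (apply (exd_cont _ 1); apply HF1, Hr; auto).
  destruct (Hcp (mkposreal _ Hp)) as [d1 Hd1].
  destruct (Hcm (mkposreal (- F (T s - e) s) ltac:(lra))) as [d2 Hd2].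
  assert (Hd3 : 0 < eps - Rabs (s - s0)) by lra.
  exists (Rmin (Rmin d1 d2) (eps - Rabs (s - s0))). split.
  { apply Rmin_pos; auto. apply Rmin_pos; apply cond_pos. }
  intros h Hh.
  assert (Hh1 := Rlt_le_trans _ _ _ Hh (Rmin_l _ _)).
  assert (Hh2 := Rlt_le_trans _ _ _ Hh (Rmin_r _ _)).
  assert (Hh3 := Rlt_le_trans _ _ _ Hh1 (Rmin_l _ _)).
  assert (Hh4 := Rlt_le_trans _ _ _ Hh1 (Rmin_r _ _)).
  assert (Hsh : Rabs (s + h - s0) < eps).
  { replace (s + h - s0) with ((s - s0) + h) by ring.
    eapply Rle_lt_trans; [apply Rabs_triang|]. lra. }
  assert (Hshr : Rabs (s + h - s0) < r) by lra.
  specialize (Hd1 (T s + e) (s + h) ltac:(rewrite Rminus_diag, Rabs_R0; apply cond_pos)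
     ltac:(replace (s + h - s) with h by ring; auto)).
  specialize (Hd2 (T s - e) (s + h) ltac:(rewrite Rminus_diag, Rabs_R0; apply cond_pos)
     ltac:(replace (s + h - s) with h by ring; auto)).
  simpl in Hd1, Hd2. apply Rabs_lt_between in Hd1. apply Rabs_lt_between in Hd2.
  destruct (HT (s + h) Hsh) as [HT1 HT2].
  assert (HT1r : Rabs (T (s + h) - t0) < r) by lra.
  assert (A1 : T (s + h) < T s + e).
  { destruct (Rtotal_order (T (s + h)) (T s + e)) as [L|[L|L]]; auto.
    - rewrite L in HT2. lra.
    - specialize (Hinc (s + h) _ _ Hshr Hxp HT1r L). lra. }
  assert (A2 : T s - e < T (s + h)).
  { destruct (Rtotal_order (T (s + h)) (T s - e)) as [L|[L|L]]; auto.
    - specialize (Hinc (s + h) _ _ Hshr HT1r Hxm L). lra.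
    - rewrite L in HT2. lra. }
  apply Rabs_lt_between. lra.
Qed.

Lemma ift_deriv V F t0 s0 r eps (T : R -> R) : open V -> Cn V 2 F ->
  0 < r -> 0 < eps -> eps <= r ->
  (forall u v, Rabs (u - t0) < r -> Rabs (v - s0) < r -> V (u, v) /\ 0 < dt F u v) ->
  (forall s, Rabs (s - s0) < eps -> Rabs (T s - t0) < r / 2 /\ F (T s) s = 0) ->
  forall s, Rabs (s - s0) < eps ->
  is_derive T s (- ds F (T s) s / dt F (T s) s).
Proof.
  intros HV HF2 Hr0 He0 Her Hr HT s Hs.
  assert (HF1 : Cn V 1 F) by (apply (Cn_le V 2); auto).
  destruct (HT s Hs) as [HTs HFs].
  assert (Hsr : Rabs (s - s0) < r) by lra.
  assert (HTr : Rabs (T s - t0) < r) by lra.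
  destruct (Hr _ _ HTr Hsr) as [HVs Ha].
  set (t := T s) in *. set (a := dt F t s) in *. set (b := ds F t s).
  set (l := - b / a).
  apply is_derive_Reals. intros eps' Heps'.
  assert (HD : differentiable_pt_lim F t s a b).
  { apply DL1_diff. eapply l2d_imp; [|apply (open_loc2d V _ _ HV HVs)].
    intros u v Huv; apply HF2, Huv. }
  set (K := 2 * Rabs l + 2).
  assert (HK : 0 < K) by (unfold K; generalize (Rabs_pos l); lra).
  set (c := Rmin (1/2) (eps' / (2 * K))).
  assert (Hc : 0 < c) by (apply Rmin_pos; [lra|apply Rdiv_lt_0_compat; lra]).
  assert (Hc1 : c <= 1/2) by apply Rmin_l.
  assert (Hc2 : c * K <= eps' / 2).
  { assert (c <= eps' / (2 * K)) by apply Rmin_r.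
    apply (Rmult_le_compat_r K) in H; [|lra].
    replace (eps' / (2 * K) * K) with (eps' / 2) in H by (field; lra). lra. }
  destruct (HD (mkposreal (c * a) ltac:(nra))) as [dd Hdd].
  destruct (ift_cont V F t0 s0 r eps T Hr0 He0 Her Hr HF1 HT s Hs dd (cond_pos dd)) as [dc [Hdc0 Hdc]].
  assert (Hd3 : 0 < eps - Rabs (s - s0)) by lra.
  assert (Hdp : 0 < Rmin (Rmin dd dc) (eps - Rabs (s - s0))).
  { apply Rmin_pos; auto. apply Rmin_pos; auto. apply cond_pos. }
  exists (mkposreal _ Hdp). intros h Hh0 Hh. simpl in Hh.
  assert (Hh1 := Rlt_le_trans _ _ _ Hh (Rmin_l _ _)).
  assert (Hh2 := Rlt_le_trans _ _ _ Hh (Rmin_r _ _)).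
  assert (Hh3 := Rlt_le_trans _ _ _ Hh1 (Rmin_l _ _)).
  assert (Hh4 := Rlt_le_trans _ _ _ Hh1 (Rmin_r _ _)).
  assert (Hsh : Rabs (s + h - s0) < eps).
  { replace (s + h - s0) with ((s - s0) + h) by ring.
    eapply Rle_lt_trans; [apply Rabs_triang|]. lra. }
  destruct (HT (s + h) Hsh) as [_ HF3].
  specialize (Hdc h Hh4). fold t in Hdc.
  specialize (Hdd (T (s + h)) (s + h) Hdc ltac:(replace (s + h - s) with h by ring; auto)).
  rewrite HF3, HFs in Hdd. replace (s + h - s) with h in Hdd by ring.
  set (k := T (s + h) - t) in *.
  assert (E1 : 0 - 0 - (a * k + b * h) = - (a * (k - l * h))) by (unfold l; field; lra).
  rewrite E1, Rabs_Ropp, Rabs_mult, (Rabs_pos_eq a) in Hdd by lra.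
  assert (HM : Rmax (Rabs k) (Rabs h) <= Rabs k + Rabs h).
  { apply Rmax_lub; generalize (Rabs_pos k) (Rabs_pos h); lra. }
  assert (H1 : Rabs (k - l * h) <= c * (Rabs k + Rabs h)).
  { simpl in Hdd. apply (Rmult_le_reg_l a); auto. eapply Rle_trans; [exact Hdd|].
    replace (a * (c * (Rabs k + Rabs h))) with ((c * a) * (Rabs k + Rabs h)) by ring.
    apply Rmult_le_compat_l; auto. nra. }
  assert (H2 : Rabs k <= Rabs (k - l * h) + Rabs l * Rabs h).
  { rewrite <- Rabs_mult. replace k with ((k - l * h) + l * h) at 1 by ring. apply Rabs_triang. }
  assert (Hhp : 0 < Rabs h) by (apply Rabs_pos_lt; auto).
  assert (H3 : Rabs k <= (2 * Rabs l + 1) * Rabs h).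
  { generalize (Rabs_pos k) (Rabs_pos l). nra. }
  assert (H4 : Rabs (k - l * h) <= c * K * Rabs h).
  { unfold K. generalize (Rabs_pos k) (Rabs_pos l). nra. }
  replace ((T (s + h) - T s) / h - l) with ((k - l * h) / h) by (unfold k, t; field; auto).
  rewrite Rabs_div by auto.
  apply (Rmult_lt_reg_r (Rabs h)); auto. unfold Rdiv.
  rewrite Rmult_assoc, Rinv_l, Rmult_1_r by lra. nra.
Qed.

Lemma loc_ball s0 eps s : Rabs (s - s0) < eps -> locally s (fun u => Rabs (u - s0) < eps).
Proof.
  intros Hs. assert (Hp : 0 < eps - Rabs (s - s0)) by lra.
  exists (mkposreal _ Hp). intros y Hy. simpl in Hy.
  change (Rabs (y - s) < eps - Rabs (s - s0)) in Hy.
  replace (y - s0) with ((y - s) + (s - s0)) by ring.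
  eapply Rle_lt_trans; [apply Rabs_triang|]. lra.
Qed.

Lemma open_rect t0 s0 r : open (fun p : R * R => Rabs (fst p - t0) < r /\ Rabs (snd p - s0) < r).
Proof.
  intros [u v] [Hu Hv]. simpl in Hu, Hv.
  apply (locally_2d_locally (fun a b => Rabs (a - t0) < r /\ Rabs (b - s0) < r) u v).
  assert (Hp : 0 < Rmin (r - Rabs (u - t0)) (r - Rabs (v - s0))) by (apply Rmin_pos; lra).
  exists (mkposreal _ Hp). intros a b Ha Hb. simpl in Ha, Hb.
  assert (Ha1 := Rlt_le_trans _ _ _ Ha (Rmin_l _ _)).
  assert (Hb1 := Rlt_le_trans _ _ _ Hb (Rmin_r _ _)).
  split.
  - replace (a - t0) with ((a - u) + (u - t0)) by ring.
    eapply Rle_lt_trans; [apply Rabs_triang|]. lra.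
  - replace (b - s0) with ((b - v) + (v - s0)) by ring.
    eapply Rle_lt_trans; [apply Rabs_triang|]. lra.
Qed.

Lemma T_smooth W G (T : R -> R) s0 eps : open W -> Cinf W G ->
  (forall s, Rabs (s - s0) < eps -> W (T s, s) /\ is_derive T s (G (T s) s)) ->
  forall n, exists H, Cinf W H /\ (forall s, Rabs (s - s0) < eps -> Derive_n T n s = H (T s) s)
    /\ (forall s, Rabs (s - s0) < eps -> is_derive (Derive_n T n) s
            (dt H (T s) s * G (T s) s + ds H (T s) s)).
Proof.
  intros HW HG HT.
  assert (Step : forall n H, Cinf W H -> (forall s, Rabs (s - s0) < eps -> Derive_n T n s = H (T s) s) ->
    forall s, Rabs (s - s0) < eps -> is_derive (Derive_n T n) s (dt H (T s) s * G (T s) s + ds H (T s) s)).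
  { intros n H HH E s Hs. destruct (HT s Hs) as [HW1 HT1].
    apply (is_derive_ext_loc (fun u => H (T u) u)).
    - eapply filter_imp; [|apply (loc_ball s0 eps s Hs)]. intros u Hu. symmetry; apply E, Hu.
    - apply (chain W); auto. }
  induction n.
  - exists (fun t _ => t). split; [apply Cinf_id1|]. split; [reflexivity|].
    apply Step. apply Cinf_id1. reflexivity.
  - destruct IHn as [H [HH [E D]]].
    exists (fun t s => dt H t s * G t s + ds H t s). split.
    { apply Cinf_plus; auto. apply Cinf_mult; auto. apply Cinf_dt; auto. apply Cinf_ds; auto. }
    assert (E' : forall s, Rabs (s - s0) < eps -> Derive_n T (S n) s = dt H (T s) s * G (T s) s + ds H (T s) s).
    { intros s Hs. simpl. apply is_derive_unique, D, Hs. }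
    split; auto. apply Step; auto.
    apply Cinf_plus; auto. apply Cinf_mult; auto. apply Cinf_dt; auto. apply Cinf_ds; auto.
Qed.

Lemma smooth_Cinf Om f : smooth_on Om f -> forall w, Cinf Om (pd w f).
Proof.
  intros H w n. revert w. induction n; intros w t s Hts; destruct (H w t s Hts) as [H1 [H2 H3]].
  - split; [|exact I]. apply continuity_2d_pt_filterlim. exact H3.
  - repeat split; auto.
    + apply continuity_2d_pt_filterlim. exact H3.
    + apply (IHn (Dt :: w)); auto.
    + apply (IHn (Ds :: w)); auto.
Qed.

Lemma deriv_zero_loc (f : R -> R) x l : @locally R_UniformSpace x (fun u => f u = 0) -> is_derive f x l -> l = 0.
Proof.
  intros Hl Hd.
  assert (H : is_derive (fun _ => 0) x l).
  { apply (is_derive_ext_loc f (fun _ => 0) x l); auto. }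
  apply is_derive_unique in H. rewrite Derive_const in H. auto.
Qed.

Lemma loc_t (Om : R * R -> Prop) t s : open Om -> Om (t, s) -> @locally R_UniformSpace t (fun z => Om (z, s)).
Proof. intros HO H. apply (locally_2d_1d_const_y (fun u v => Om (u, v))), open_loc2d; auto. Qed.
Lemma loc_s (Om : R * R -> Prop) t s : open Om -> Om (t, s) -> @locally R_UniformSpace s (fun z => Om (t, z)).
Proof. intros HO H. apply (locally_2d_1d_const_x (fun u v => Om (u, v))), open_loc2d; auto. Qed.

Lemma dT Om F t s : Cinf Om F -> Om (t, s) -> is_derive (fun z => F z s) t (dt F t s).
Proof. intros H Ht. apply Derive_correct. apply (exd_dt F 0). apply H, Ht. Qed.
Lemma dS Om F t s : Cinf Om F -> Om (t, s) -> is_derive (fun z => F t z) s (ds F t s).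
Proof. intros H Ht. apply Derive_correct. apply (exd_ds F 0). apply H, Ht. Qed.

Lemma schwarz_C (Om : R * R -> Prop) f t s : open Om -> Cinf Om f -> Om (t, s) -> dt (ds f) t s = ds (dt f) t s.
Proof.
  intros HO Hf Hts. unfold dt, ds. apply Schwarz.
  - eapply l2d_imp; [|apply (open_loc2d Om t s HO Hts)]. intros u v Huv.
    repeat split.
    + apply (exd_dt f 0), Hf, Huv.
    + apply (exd_ds f 0), Hf, Huv.
    + apply (exd_dt (ds f) 0). apply (Cinf_ds Om f Hf 1%nat), Huv.
    + apply (exd_ds (dt f) 0). apply (Cinf_dt Om f Hf 1%nat), Huv.
  - apply (exd_cont _ 0). apply (Cinf_dt Om _ (Cinf_ds Om f Hf) 0%nat), Hts.
  - apply (exd_cont _ 0). apply (Cinf_ds Om _ (Cinf_dt Om f Hf) 0%nat), Hts.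
Qed.

Lemma alg_perp e1 e2 u1 u2 v1 v2 : e1 * e1 + e2 * e2 = 1 -> u1 * e1 + u2 * e2 = 0 ->
  (u1 * v2 - u2 * v1) ^ 2 = (u1 * u1 + u2 * u2) * (e1 * v1 + e2 * v2) ^ 2.
Proof.
  intros He Hu.
  assert (Hu1 : u1 = - e2 * (u2 * e1 - u1 * e2)).
  { transitivity (u1 * (e1 * e1 + e2 * e2)); [rewrite He; ring|].
    replace (u1 * (e1 * e1 + e2 * e2)) with (e1 * (u1 * e1 + u2 * e2) + - e2 * (u2 * e1 - u1 * e2)) by ring.
    rewrite Hu; ring. }
  assert (Hu2 : u2 = e1 * (u2 * e1 - u1 * e2)).
  { transitivity (u2 * (e1 * e1 + e2 * e2)); [rewrite He; ring|].
    replace (u2 * (e1 * e1 + e2 * e2)) with (e2 * (u1 * e1 + u2 * e2) + e1 * (u2 * e1 - u1 * e2)) by ring.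
    rewrite Hu; ring. }
  set (lam := u2 * e1 - u1 * e2) in *.
  rewrite Hu1, Hu2.
  replace (- e2 * lam * (- e2 * lam) + e1 * lam * (e1 * lam)) with (lam * lam * (e1 * e1 + e2 * e2)) by ring.
  rewrite He; ring.
Qed.

Lemma alg_lagrange a1 a2 b1 b2 : (a1 * b2 - a2 * b1) ^ 2 + (a1 * b1 + a2 * b2) ^ 2 =
  (a1 * a1 + a2 * a2) * (b1 * b1 + b2 * b2).
Proof. ring. Qed.

Lemma mvt_sign (f df : R -> R) a b : a < b ->
  (forall x, a <= x <= b -> is_derive f x (df x)) ->
  exists c, a <= c <= b /\ f b - f a = df c * (b - a).
Proof.
  intros Hab Hd.
  destruct (MVT_gen f a b df) as [c [Hc E]].
  - intros x Hx. apply Hd. rewrite Rmin_left, Rmax_right in Hx; lra.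
  - intros x Hx. rewrite Rmin_left, Rmax_right in Hx by lra.
    apply continuity_pt_filterlim. apply (ex_derive_continuous f). eexists; apply Hd; auto.
  - exists c. rewrite Rmin_left, Rmax_right in Hc by lra. auto.
Qed.

Lemma incr_weak (f df : R -> R) a b : a <= b ->
  (forall x, a <= x <= b -> is_derive f x (df x) /\ 0 <= df x) -> f a <= f b.
Proof.
  intros Hab Hd. destruct (Req_dec a b) as [E|E]; [subst; lra|].
  destruct (mvt_sign f df a b) as [c [Hc Ec]]; [lra|intros; apply Hd; auto|].
  destruct (Hd c Hc). nra.
Qed.

Lemma incr_strict (f df : R -> R) a b : a < b ->
  (forall x, a <= x <= b -> is_derive f x (df x) /\ 0 < df x) -> f a < f b.
Proof.
  intros Hab Hd.
  destruct (mvt_sign f df a b) as [c [Hc Ec]]; [lra|intros; apply Hd; auto|].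
  destruct (Hd c Hc). nra.
Qed.

Lemma isd_plus (f g : R -> R) x a b : is_derive f x a -> is_derive g x b ->
  is_derive (fun y => f y + g y) x (a + b).
Proof. intros H1 H2. exact (is_derive_plus f g x a b H1 H2). Qed.
Lemma isd_mult (f g : R -> R) x a b : is_derive f x a -> is_derive g x b ->
  is_derive (fun y => f y * g y) x (a * g x + f x * b).
Proof. intros H1 H2. exact (Derive.is_derive_mult f g x a b H1 H2). Qed.

Lemma sing_facts (Om : R * R -> Prop) g1 g2 t s : open Om -> Cinf Om g1 -> Cinf Om g2 ->
  (forall t s, Om (t, s) -> dt g1 t s * ds g1 t s + dt g2 t s * ds g2 t s = 0) ->
  (forall t s, Om (t, s) -> dt g1 t s * dt g1 t s + dt g2 t s * dt g2 t s +
                            (ds g1 t s * ds g1 t s + ds g2 t s * ds g2 t s) = 1) ->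
  Om (t, s) -> ds g1 t s = 0 -> ds g2 t s = 0 ->
  dt g1 t s * dt g1 t s + dt g2 t s * dt g2 t s = 1 /\
  dt g1 t s * dt (ds g1) t s + dt g2 t s * dt (ds g2) t s = 0 /\
  2 * (ds (dt g1) t s * ds (ds g1) t s + ds (dt g2) t s * ds (ds g2) t s)
    + (dt g1 t s * ds (ds (ds g1)) t s + dt g2 t s * ds (ds (ds g2)) t s) = 0.
Proof.
  intros HO C1 C2 HP HN Hts E1 E2.
  split; [specialize (HN t s Hts); rewrite E1, E2 in HN; lra|].
  split.
  - assert (D := isd_plus _ _ t _ _
       (isd_mult _ _ t _ _ (dT Om (dt g1) t s (Cinf_dt _ _ C1) Hts) (dT Om (ds g1) t s (Cinf_ds _ _ C1) Hts))
       (isd_mult _ _ t _ _ (dT Om (dt g2) t s (Cinf_dt _ _ C2) Hts) (dT Om (ds g2) t s (Cinf_ds _ _ C2) Hts))).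
    apply deriv_zero_loc in D.
    + rewrite E1, E2 in D. lra.
    + eapply filter_imp; [|apply (loc_t Om t s HO Hts)]. intros z Hz. apply HP, Hz.
  - set (E := fun u => ds (dt g1) t u * ds g1 t u + dt g1 t u * ds (ds g1) t u +
                       (ds (dt g2) t u * ds g2 t u + dt g2 t u * ds (ds g2) t u)).
    assert (HE : forall u, Om (t, u) -> E u = 0).
    { intros u Hu.
      assert (D := isd_plus _ _ u _ _
       (isd_mult _ _ u _ _ (dS Om (dt g1) t u (Cinf_dt _ _ C1) Hu) (dS Om (ds g1) t u (Cinf_ds _ _ C1) Hu))
       (isd_mult _ _ u _ _ (dS Om (dt g2) t u (Cinf_dt _ _ C2) Hu) (dS Om (ds g2) t u (Cinf_ds _ _ C2) Hu))).
      apply deriv_zero_loc in D. exact D.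
      eapply filter_imp; [|apply (loc_s Om t u HO Hu)]. intros z Hz. apply HP, Hz. }
    assert (D := isd_plus _ _ s _ _
       (isd_plus _ _ s _ _
         (isd_mult _ _ s _ _ (dS Om (ds (dt g1)) t s (Cinf_ds _ _ (Cinf_dt _ _ C1)) Hts)
                             (dS Om (ds g1) t s (Cinf_ds _ _ C1) Hts))
         (isd_mult _ _ s _ _ (dS Om (dt g1) t s (Cinf_dt _ _ C1) Hts)
                             (dS Om (ds (ds g1)) t s (Cinf_ds _ _ (Cinf_ds _ _ C1)) Hts)))
       (isd_plus _ _ s _ _
         (isd_mult _ _ s _ _ (dS Om (ds (dt g2)) t s (Cinf_ds _ _ (Cinf_dt _ _ C2)) Hts)
                             (dS Om (ds g2) t s (Cinf_ds _ _ C2) Hts))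
         (isd_mult _ _ s _ _ (dS Om (dt g2) t s (Cinf_dt _ _ C2) Hts)
                             (dS Om (ds (ds g2)) t s (Cinf_ds _ _ (Cinf_ds _ _ C2)) Hts)))).
    apply deriv_zero_loc in D.
    + rewrite E1, E2 in D. lra.
    + eapply filter_imp; [|apply (loc_s Om t s HO Hts)]. intros z Hz. apply HE, Hz.
Qed.

Lemma open_pos (Om : R * R -> Prop) K c : open Om ->
  (forall t s, Om (t, s) -> continuity_2d_pt K t s) ->
  open (fun p : R * R => Om p /\ c < K (fst p) (snd p)).
Proof.
  intros HO HK [t s] [H1 H2]. simpl in H2.
  assert (Hp : 0 < K t s - c) by lra.
  destruct (HK t s H1 (mkposreal _ Hp)) as [d Hd].
  assert (L : locally (t, s) (fun p : R * R => c < K (fst p) (snd p))).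
  { apply (locally_2d_locally (fun u v => c < K u v)). exists d. intros u v Hu Hv.
    specialize (Hd u v Hu Hv). simpl in Hd. apply Rabs_lt_between in Hd. lra. }
  generalize (filter_and _ _ (HO _ H1) L). apply filter_imp. auto.
Qed.

Lemma sing_of_phi a1 a2 b1 b2 : a1 * b2 - a2 * b1 = 0 -> a1 * b1 + a2 * b2 = 0 ->
  0 < a1 * a1 + a2 * a2 -> b1 = 0 /\ b2 = 0.
Proof.
  intros H1 H2 H3. generalize (alg_lagrange a1 a2 b1 b2). rewrite H1, H2. intros E.
  assert (b1 * b1 + b2 * b2 = 0).
  { apply (Rmult_eq_reg_l (a1 * a1 + a2 * a2)); [|lra]. rewrite <- E. ring. }
  split; nra.
Qed.

Lemma isd_minus (f g : R -> R) x a b : is_derive f x a -> is_derive g x b ->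
  is_derive (fun y => f y - g y) x (a - b).
Proof. intros H1 H2. exact (is_derive_minus f g x a b H1 H2). Qed.
Lemma isd_opp (f : R -> R) x a : is_derive f x a -> is_derive (fun y => - f y) x (- a).
Proof. intros H1. exact (is_derive_opp f x a H1). Qed.

Lemma pair0 (a b : R) : (a, b) = (0, 0) <-> a = 0 /\ b = 0.
Proof. split. intros H; inversion H; auto. intros [-> ->]; auto. Qed.

Lemma cont_eps (f : R -> R) x : ex_derive f x ->
  forall e, 0 < e -> exists d, 0 < d /\ forall y, Rabs (y - x) < d -> Rabs (f y - f x) < e.
Proof.
  intros Hd e He. apply (ex_derive_continuous f) in Hd.
  destruct (proj1 (filterlim_locally f (f x)) Hd (mkposreal e He)) as [d Hdd].
  exists d. split; [apply cond_pos|]. intros y Hy. apply (Hdd y Hy).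
Qed.

Lemma extremum (f df : R -> R) s0 e : 0 < e ->
  (forall x, Rabs (x - s0) < e -> is_derive f x (df x)) -> df s0 = 0 ->
  (forall x, Rabs (x - s0) < e -> x < s0 -> 0 < df x) ->
  (forall x, Rabs (x - s0) < e -> s0 < x -> df x < 0) ->
  forall s, Rabs (s - s0) < e -> s <> s0 -> f s < f s0.
Proof.
  intros He Hd H0 Hl Hg s Hs Hne. apply Rabs_lt_between in Hs.
  destruct (Rlt_or_le s s0) as [Hlt|Hge].
  - set (m := (s + s0) / 2).
    assert (A : f s < f m).
    { apply (incr_strict f df); [unfold m; lra|]. intros x Hx.
      assert (Hx' : Rabs (x - s0) < e) by (apply Rabs_lt_between; unfold m in Hx; lra).
      split; [apply Hd; auto|apply Hl; auto; unfold m in Hx; lra]. }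
    assert (B : f m <= f s0).
    { apply (incr_weak f df); [unfold m; lra|]. intros x Hx.
      assert (Hx' : Rabs (x - s0) < e) by (apply Rabs_lt_between; unfold m in Hx; lra).
      split; [apply Hd; auto|]. destruct (Req_dec x s0) as [->|Hn]; [lra|].
      apply Rlt_le, Hl; auto. lra. }
    lra.
  - assert (Hgt : s0 < s) by (destruct Hge; auto; congruence).
    set (m := (s + s0) / 2).
    assert (A : - f s0 <= - f m).
    { apply (incr_weak (fun y => - f y) (fun y => - df y)); [unfold m; lra|]. intros x Hx.
      assert (Hx' : Rabs (x - s0) < e) by (apply Rabs_lt_between; unfold m in Hx; lra).
      split; [apply isd_opp, Hd; auto|]. destruct (Req_dec x s0) as [->|Hn]; [lra|].
      assert (df x < 0) by (apply Hg; auto; lra). lra. }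
    assert (B : - f m < - f s).
    { apply (incr_strict (fun y => - f y) (fun y => - df y)); [unfold m; lra|]. intros x Hx.
      assert (Hx' : Rabs (x - s0) < e) by (apply Rabs_lt_between; unfold m in Hx; lra).
      split; [apply isd_opp, Hd; auto|]. assert (df x < 0) by (apply Hg; auto; unfold m in Hx; lra). lra. }
    lra.
Qed.

Lemma sign_side (h dh : R -> R) s0 e : 0 < e ->
  (forall x, Rabs (x - s0) < e -> is_derive h x (dh x) /\ 0 < dh x) -> h s0 = 0 ->
  forall s, Rabs (s - s0) < e -> (s < s0 -> h s < 0) /\ (s0 < s -> 0 < h s).
Proof.
  intros He Hd H0 s Hs. apply Rabs_lt_between in Hs. split; intros Hlt.
  - rewrite <- H0. apply (incr_strict h dh); auto. intros x Hx. apply Hd, Rabs_lt_between; lra.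
  - rewrite <- H0. apply (incr_strict h dh); auto. intros x Hx. apply Hd, Rabs_lt_between; lra.
Qed.

Theorem proposition3p2 (Om : R * R -> Prop) (g : R -> R -> R * R) (t0 s0 : R) :
  open Om ->
  smooth_map Om g ->
  (forall t s, Om (t, s) -> pdv (Dt :: Dt :: nil) g t s = pdv (Ds :: Ds :: nil) g t s) ->
  (forall t s, Om (t, s) -> ip (pdv (Dt :: nil) g t s) (pdv (Ds :: nil) g t s) = 0) ->
  (forall t s, Om (t, s) -> nrm2 (pdv (Dt :: nil) g t s) + nrm2 (pdv (Ds :: nil) g t s) = 1) ->
  Om (t0, s0) ->
  pdv (Ds :: nil) g t0 s0 = (0, 0) ->
  pdv (Dt :: Ds :: nil) g t0 s0 <> (0, 0) ->
  exists (eps del : R) (T : R -> R),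
    0 < eps /\ 0 < del /\
    (forall t s, Rabs (t - t0) < del -> Rabs (s - s0) < eps -> Om (t, s)) /\
    T s0 = t0 /\
    (forall s, Rabs (s - s0) < eps -> Rabs (T s - t0) < del) /\
    (forall (n : nat) s, Rabs (s - s0) < eps -> ex_derive_n T n s) /\
    (forall s, Rabs (s - s0) < eps ->
       pdv (Dt :: Ds :: nil) g (T s) s <> (0, 0) /\
       is_derive T s
         (- ip (pdv (Ds :: Ds :: nil) g (T s) s) (pdv (Dt :: Ds :: nil) g (T s) s)
            / nrm2 (pdv (Dt :: Ds :: nil) g (T s) s))) /\
    (forall t s, Rabs (t - t0) < del -> Rabs (s - s0) < eps ->
       (singular g t s <-> t = T s)) /\
    (forall s, Rabs (s - s0) < eps -> null_at T g s) /\
    (pdv (Ds :: Ds :: nil) g t0 s0 = (0, 0) ->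
     pdv (Ds :: Ds :: Ds :: nil) g t0 s0 <> (0, 0) ->
       (forall s, Rabs (s - s0) < eps -> s <> s0 -> plane_cusp g (T s) s) /\
       (0 < ip (pdv (Ds :: Ds :: Ds :: nil) g t0 s0) (pdv (Dt :: Ds :: nil) g t0 s0) ->
          forall s, Rabs (s - s0) < eps -> s <> s0 -> T s < t0) /\
       (ip (pdv (Ds :: Ds :: Ds :: nil) g t0 s0) (pdv (Dt :: Ds :: nil) g t0 s0) < 0 ->
          forall s, Rabs (s - s0) < eps -> s <> s0 -> t0 < T s) /\
       (forall s, Rabs (s - s0) < eps -> s <> s0 -> Derive T s <> 0) /\
       spacetime_cusp T g s0).
Proof.
  intros HO [Hs1 Hs2] _ HP0 HN0 H0 Hsg0 Hts0.
  set (g1 := gam1 g) in *. set (g2 := gam2 g) in *.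
  assert (C1 : Cinf Om g1) by exact (smooth_Cinf Om g1 Hs1 nil).
  assert (C2 : Cinf Om g2) by exact (smooth_Cinf Om g2 Hs2 nil).
  assert (E_t : forall t s, pdv (Dt :: nil) g t s = (dt g1 t s, dt g2 t s)) by reflexivity.
  assert (E_s : forall t s, pdv (Ds :: nil) g t s = (ds g1 t s, ds g2 t s)) by reflexivity.
  assert (E_ts : forall t s, pdv (Dt :: Ds :: nil) g t s = (dt (ds g1) t s, dt (ds g2) t s)) by reflexivity.
  assert (E_ss : forall t s, pdv (Ds :: Ds :: nil) g t s = (ds (ds g1) t s, ds (ds g2) t s)) by reflexivity.
  assert (E_sss : forall t s, pdv (Ds :: Ds :: Ds :: nil) g t s =
     (ds (ds (ds g1)) t s, ds (ds (ds g2)) t s)) by reflexivity.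
  assert (HP : forall t s, Om (t, s) -> dt g1 t s * ds g1 t s + dt g2 t s * ds g2 t s = 0).
  { intros t s H. specialize (HP0 t s H). rewrite E_t, E_s in HP0. exact HP0. }
  assert (HN : forall t s, Om (t, s) -> dt g1 t s * dt g1 t s + dt g2 t s * dt g2 t s +
                            (ds g1 t s * ds g1 t s + ds g2 t s * ds g2 t s) = 1).
  { intros t s H. specialize (HN0 t s H). rewrite E_t, E_s in HN0. exact HN0. }
  clear HP0 HN0.
  rewrite E_s, pair0 in Hsg0. destruct Hsg0 as [Z1 Z2].
  rewrite E_ts, pair0 in Hts0.
  assert (SF := fun t s => sing_facts Om g1 g2 t s HO C1 C2 HP HN).
  destruct (SF t0 s0 H0 Z1 Z2) as [S1 [S2 _]].
  set (K1 := fun t s => dt g1 t s * dt g1 t s + dt g2 t s * dt g2 t s).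
  set (K2 := fun t s => dt (ds g1) t s * dt (ds g1) t s + dt (ds g2) t s * dt (ds g2) t s).
  assert (CK1 : Cinf Om K1) by (apply Cinf_plus; auto; apply Cinf_mult; auto; apply Cinf_dt; auto).
  assert (CK2 : Cinf Om K2) by (apply Cinf_plus; auto; apply Cinf_mult; auto; apply Cinf_dt, Cinf_ds; auto).
  set (V0 := fun p : R * R => (Om p /\ 1/2 < K1 (fst p) (snd p)) /\ 0 < K2 (fst p) (snd p)).
  assert (HV0 : open V0).
  { apply open_pos. apply open_pos; auto.
    intros t s H; apply (exd_cont _ 0), CK1, H.
    intros t s [H _]; apply (exd_cont _ 0), CK2, H. }
  assert (V0Om : forall p, V0 p -> Om p) by (intros p [[H _] _]; exact H).
  assert (HK20 : 0 < K2 t0 s0).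
  { unfold K2. destruct (Req_dec (dt (ds g1) t0 s0) 0); destruct (Req_dec (dt (ds g2) t0 s0) 0).
    - exfalso; tauto.
    - nra. - nra. - nra. }
  assert (HV00 : V0 (t0, s0)).
  { split; [split|]; simpl; auto. unfold K1. lra. }
  set (phi := fun t s => dt g1 t s * ds g2 t s - dt g2 t s * ds g1 t s).
  assert (Cphi : Cinf Om phi).
  { apply Cinf_minus; auto; apply Cinf_mult; auto; try apply Cinf_dt; try apply Cinf_ds; auto. }
  set (D0 := dt g1 t0 s0 * dt (ds g2) t0 s0 - dt g2 t0 s0 * dt (ds g1) t0 s0).
  assert (HD0 : dt phi t0 s0 = D0).
  { apply is_derive_unique.
    assert (D := isd_minus _ _ t0 _ _
       (isd_mult _ _ t0 _ _ (dT Om (dt g1) t0 s0 (Cinf_dt _ _ C1) H0) (dT Om (ds g2) t0 s0 (Cinf_ds _ _ C2) H0))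
       (isd_mult _ _ t0 _ _ (dT Om (dt g2) t0 s0 (Cinf_dt _ _ C2) H0) (dT Om (ds g1) t0 s0 (Cinf_ds _ _ C1) H0))).
    unfold D0. cbv beta in D. rewrite Z1, Z2 in D. replace (dt g1 t0 s0 * dt (ds g2) t0 s0 - dt g2 t0 s0 * dt (ds g1) t0 s0)
      with (dt (dt g1) t0 s0 * 0 + dt g1 t0 s0 * dt (ds g2) t0 s0 -
            (dt (dt g2) t0 s0 * 0 + dt g2 t0 s0 * dt (ds g1) t0 s0)) by ring. exact D. }
  assert (HD0nz : D0 <> 0).
  { intro E. generalize (alg_lagrange (dt g1 t0 s0) (dt g2 t0 s0) (dt (ds g1) t0 s0) (dt (ds g2) t0 s0)).
    fold D0. rewrite E, S2. unfold K1, K2 in *. nra. }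
  assert (HF : exists F, Cinf V0 F /\ (forall t s, F t s = 0 <-> phi t s = 0) /\
                 F t0 s0 = 0 /\ 0 < dt F t0 s0).
  { assert (Hphi0 : phi t0 s0 = 0) by (unfold phi; rewrite Z1, Z2; ring).
    destruct (Rlt_or_le 0 D0) as [Hp|Hn].
    - exists phi. repeat split; auto. apply (Cinf_sub Om); auto. rewrite HD0; auto.
    - exists (fun t s => - phi t s). repeat split.
      + apply (Cinf_sub Om); auto. apply Cinf_opp; auto.
      + intros H; lra.
      + intros H; rewrite H; ring.
      + rewrite Hphi0; ring.
      + assert (D := isd_opp _ t0 _ (dT Om phi t0 s0 Cphi H0)).
        assert (E : dt (fun t s => - phi t s) t0 s0 = - dt phi t0 s0) by exact (is_derive_unique _ _ _ D).
        rewrite E, HD0. lra. }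
  destruct HF as [F [CF [HFphi [HF0 HFa]]]].
  destruct (ift_core V0 F t0 s0 HV0 CF HV00 HF0 HFa) as [r [eps [T [Hr0 [He0 [Her [Hr [HTs0 [HT Huniq]]]]]]]]].
  assert (HTd := ift_deriv V0 F t0 s0 r eps T HV0 (CF 2%nat) Hr0 He0 Her Hr HT).
  assert (HB : forall s, Rabs (s - s0) < eps -> V0 (T s, s) /\ 0 < dt F (T s) s).
  { intros s Hs. destruct (HT s Hs) as [H1 _]. apply Hr; lra. }
  assert (HBOm : forall s, Rabs (s - s0) < eps -> Om (T s, s)).
  { intros s Hs. apply V0Om, HB, Hs. }
  assert (Hsing : forall s, Rabs (s - s0) < eps -> ds g1 (T s) s = 0 /\ ds g2 (T s) s = 0).
  { intros s Hs. destruct (HB s Hs) as [[[HOm HK1] _] _]. simpl in HK1.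
    destruct (HT s Hs) as [_ HFz]. apply HFphi in HFz. unfold phi in HFz.
    apply (sing_of_phi (dt g1 (T s) s) (dt g2 (T s) s)); auto. unfold K1 in HK1; lra. }
  set (lT := fun s => - ds F (T s) s / dt F (T s) s).
  assert (HlT : forall s, Rabs (s - s0) < eps -> is_derive T s (lT s)) by exact HTd.
  assert (Hid : forall s, Rabs (s - s0) < eps ->
     dt (ds g1) (T s) s * lT s + ds (ds g1) (T s) s = 0 /\
     dt (ds g2) (T s) s * lT s + ds (ds g2) (T s) s = 0).
  { intros s Hs. split.
    - apply (deriv_zero_loc (fun u => ds g1 (T u) u) s _
        ltac:(eapply filter_imp; [|apply (loc_ball s0 eps s Hs)]; intros u Hu; apply Hsing, Hu)
        (chain Om (ds g1) T s (lT s) HO (Cinf_ds Om g1 C1 2%nat) (HBOm s Hs) (HlT s Hs))).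
    - apply (deriv_zero_loc (fun u => ds g2 (T u) u) s _
        ltac:(eapply filter_imp; [|apply (loc_ball s0 eps s Hs)]; intros u Hu; apply Hsing, Hu)
        (chain Om (ds g2) T s (lT s) HO (Cinf_ds Om g2 C2 2%nat) (HBOm s Hs) (HlT s Hs))). }
  set (W := fun p : R * R => Rabs (fst p - t0) < r /\ Rabs (snd p - s0) < r).
  assert (HW : open W) by apply open_rect.
  assert (CFW : Cinf W F) by (apply (Cinf_sub V0); auto; intros [u v] [Hu Hv]; apply Hr; auto).
  set (G := fun t s => - ds F t s * / dt F t s).
  assert (CG : Cinf W G).
  { apply Cinf_mult; auto. apply Cinf_opp; auto. apply Cinf_ds; auto.
    apply Cinf_inv; auto. apply Cinf_dt; auto. intros t s [Ht Hs]. simpl in Ht, Hs.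
    destruct (Hr t s Ht Hs). lra. }
  assert (HTW : forall s, Rabs (s - s0) < eps -> W (T s, s) /\ is_derive T s (G (T s) s)).
  { intros s Hs. split; [|exact (HlT s Hs)]. destruct (HT s Hs). split; simpl; lra. }
  assert (Hsm := T_smooth W G T s0 eps HW CG HTW).
  assert (HDn : forall n s, Rabs (s - s0) < eps -> is_derive (Derive_n T n) s (Derive_n T (S n) s)).
  { intros n s Hs. destruct (Hsm n) as [H [_ [_ Hd]]]. specialize (Hd s Hs).
    replace (Derive_n T (S n) s) with (dt H (T s) s * G (T s) s + ds H (T s) s); auto.
    simpl. symmetry; apply is_derive_unique; auto. }
  assert (HDT : forall s, Rabs (s - s0) < eps -> Derive T s = lT s).
  { intros s Hs. apply is_derive_unique, HlT, Hs. }
  assert (B1 : forall t s, Rabs (t - t0) < r -> Rabs (s - s0) < eps -> Om (t, s)).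
  { intros t s Ht Hs. apply V0Om. apply Hr; auto. lra. }
  assert (B2 : forall s, Rabs (s - s0) < eps -> Rabs (T s - t0) < r).
  { intros s Hs. destruct (HT s Hs). lra. }
  assert (B3 : forall n s, Rabs (s - s0) < eps -> ex_derive_n T n s).
  { intros n s Hs. destruct n; [exact I|]. simpl. eexists. apply HDn, Hs. }
  assert (B4 : forall s, Rabs (s - s0) < eps ->
       pdv (Dt :: Ds :: nil) g (T s) s <> (0, 0) /\
       is_derive T s
         (- ip (pdv (Ds :: Ds :: nil) g (T s) s) (pdv (Dt :: Ds :: nil) g (T s) s)
            / nrm2 (pdv (Dt :: Ds :: nil) g (T s) s))).
  { intros s Hs. destruct (HB s Hs) as [[_ HK2] _]. simpl in HK2. unfold K2 in HK2.
    rewrite E_ts, E_ss. split.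
    - rewrite pair0. intros [A B]. rewrite A, B in HK2. lra.
    - unfold nrm2, ip. simpl. destruct (Hid s Hs) as [I1 I2].
      replace (ds (ds g1) (T s) s) with (- (dt (ds g1) (T s) s * lT s)) by lra.
      replace (ds (ds g2) (T s) s) with (- (dt (ds g2) (T s) s * lT s)) by lra.
      match goal with |- is_derive T s ?v => replace v with (lT s) end.
      apply HlT, Hs. field. lra. }
  assert (B5 : forall t s, Rabs (t - t0) < r -> Rabs (s - s0) < eps ->
       (singular g t s <-> t = T s)).
  { intros t s Ht Hs. unfold singular. rewrite E_s, pair0. split.
    - intros [A B]. apply Huniq; auto. apply HFphi. unfold phi. rewrite A, B; ring.
    - intros ->. apply Hsing, Hs. }
  assert (Hc1 : forall s, Rabs (s - s0) < eps -> is_derive (crv1 T g) s (dt g1 (T s) s * lT s)).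
  { intros s Hs. destruct (Hsing s Hs) as [A _].
    assert (D := chain Om g1 T s (lT s) HO (C1 2%nat) (HBOm s Hs) (HlT s Hs)).
    rewrite A, Rplus_0_r in D. exact D. }
  assert (Hc2 : forall s, Rabs (s - s0) < eps -> is_derive (crv2 T g) s (dt g2 (T s) s * lT s)).
  { intros s Hs. destruct (Hsing s Hs) as [_ A].
    assert (D := chain Om g2 T s (lT s) HO (C2 2%nat) (HBOm s Hs) (HlT s Hs)).
    rewrite A, Rplus_0_r in D. exact D. }
  assert (B6 : forall s, Rabs (s - s0) < eps -> null_at T g s).
  { intros s Hs. unfold null_at. unfold crv0. rewrite (HDT s Hs).
    rewrite (is_derive_unique _ _ _ (Hc1 s Hs)), (is_derive_unique _ _ _ (Hc2 s Hs)).
    destruct (Hsing s Hs) as [A B]. destruct (SF _ _ (HBOm s Hs) A B) as [S _].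
    replace (- lT s ^ 2 + (dt g1 (T s) s * lT s) ^ 2 + (dt g2 (T s) s * lT s) ^ 2)
      with (lT s ^ 2 * (dt g1 (T s) s * dt g1 (T s) s + dt g2 (T s) s * dt g2 (T s) s - 1)) by ring.
    rewrite S. ring. }
  assert (Cusp : pdv (Ds :: Ds :: nil) g t0 s0 = (0, 0) -> pdv (Ds :: Ds :: Ds :: nil) g t0 s0 <> (0, 0) ->
    exists e', 0 < e' /\ e' <= eps /\
       (forall s, Rabs (s - s0) < e' -> s <> s0 -> plane_cusp g (T s) s) /\
       (0 < ip (pdv (Ds :: Ds :: Ds :: nil) g t0 s0) (pdv (Dt :: Ds :: nil) g t0 s0) ->
          forall s, Rabs (s - s0) < e' -> s <> s0 -> T s < t0) /\
       (ip (pdv (Ds :: Ds :: Ds :: nil) g t0 s0) (pdv (Dt :: Ds :: nil) g t0 s0) < 0 ->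
          forall s, Rabs (s - s0) < e' -> s <> s0 -> t0 < T s) /\
       (forall s, Rabs (s - s0) < e' -> s <> s0 -> Derive T s <> 0) /\
       spacetime_cusp T g s0).
  { intros Hk1 Hk2. rewrite E_ss, pair0 in Hk1. destruct Hk1 as [Z3 Z4].
    rewrite E_sss, pair0 in Hk2. rewrite E_sss, E_ts. unfold ip. simpl.
    assert (Hs00 : Rabs (s0 - s0) < eps) by (rewrite Rminus_diag, Rabs_R0; auto).
    assert (Hl0 : lT s0 = 0).
    { destruct (Hid s0 Hs00) as [I1 I2]. rewrite HTs0, Z3 in I1. rewrite HTs0, Z4 in I2.
      destruct (Req_dec (dt (ds g1) t0 s0) 0) as [A|A].
      - assert (dt (ds g2) t0 s0 <> 0) by tauto. nra.
      - nra. }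
    assert (HD0' : Derive T s0 = 0) by (rewrite (HDT s0 Hs00); exact Hl0).
    assert (HT2 : forall s, Rabs (s - s0) < eps -> is_derive (Derive T) s (Derive_n T 2 s)).
    { intros s Hs. exact (HDn 1%nat s Hs). }

  assert (Hcc1 : forall u, Rabs (u - s0) < eps ->
     is_derive (fun v => dt g1 (T v) v) u (dt (dt g1) (T u) u * Derive T u + ds (dt g1) (T u) u)).
  { intros u Hu. rewrite (HDT u Hu). exact (chain Om (dt g1) T u (lT u) HO (Cinf_dt _ _ C1 2%nat) (HBOm u Hu) (HlT u Hu)). }
  assert (Hq1 : exists X, is_derive (fun v => dt (dt g1) (T v) v * Derive T v + ds (dt g1) (T v) v) s0 X).
  { eexists. apply isd_plus. apply isd_mult.
    exact (chain Om (dt (dt g1)) T s0 (lT s0) HO (Cinf_dt _ _ (Cinf_dt _ _ C1) 2%nat) (HBOm s0 Hs00) (HlT s0 Hs00)).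
    exact (HT2 s0 Hs00).
    exact (chain Om (ds (dt g1)) T s0 (lT s0) HO (Cinf_ds _ _ (Cinf_dt _ _ C1) 2%nat) (HBOm s0 Hs00) (HlT s0 Hs00)). }
  destruct Hq1 as [X1 HX1].
  assert (Hd2_1 : forall u, Rabs (u - s0) < eps -> is_derive (Derive (crv1 T g)) u
     ((dt (dt g1) (T u) u * Derive T u + ds (dt g1) (T u) u) * Derive T u + dt g1 (T u) u * Derive_n T 2 u)).
  { intros u Hu. apply (is_derive_ext_loc (fun v => dt g1 (T v) v * Derive T v)).
    - eapply filter_imp; [|apply (loc_ball s0 eps u Hu)]. intros v Hv.
      rewrite (is_derive_unique _ _ _ (Hc1 v Hv)), (HDT v Hv). reflexivity.
    - apply (isd_mult (fun v => dt g1 (T v) v) (Derive T)). apply Hcc1, Hu. apply HT2, Hu. }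
  assert (Hn2_1 : Derive_n (crv1 T g) 2 s0 = dt g1 t0 s0 * Derive_n T 2 s0).
  { change (Derive (Derive (crv1 T g)) s0 = dt g1 t0 s0 * Derive_n T 2 s0).
    rewrite (is_derive_unique _ _ _ (Hd2_1 s0 Hs00)). rewrite HD0', HTs0. ring. }
  assert (Hn3_1 : Derive_n (crv1 T g) 3 s0 = 2 * (ds (dt g1) t0 s0 * Derive_n T 2 s0) + dt g1 t0 s0 * Derive_n T 3 s0).
  { change (Derive (Derive_n (crv1 T g) 2) s0 = 2 * (ds (dt g1) t0 s0 * Derive_n T 2 s0) + dt g1 t0 s0 * Derive_n T 3 s0).
    assert (D := isd_plus _ _ s0 _ _ (isd_mult _ _ s0 _ _ HX1 (HT2 s0 Hs00))
                  (isd_mult _ _ s0 _ _ (Hcc1 s0 Hs00) (HDn 2%nat s0 Hs00))). cbv beta in D.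
    assert (L : @locally R_UniformSpace s0 (fun v => (dt (dt g1) (T v) v * Derive T v + ds (dt g1) (T v) v) * Derive T v + dt g1 (T v) v * Derive_n T 2 v = Derive_n (crv1 T g) 2 v)).
    { eapply filter_imp; [|apply (loc_ball s0 eps s0 Hs00)]. intros v Hv. symmetry. exact (is_derive_unique _ _ _ (Hd2_1 v Hv)). }
    rewrite (is_derive_unique _ _ _ (is_derive_ext_loc _ _ _ _ L D)).
    rewrite HD0', HTs0. ring. }
  assert (Hcc2 : forall u, Rabs (u - s0) < eps ->
     is_derive (fun v => dt g2 (T v) v) u (dt (dt g2) (T u) u * Derive T u + ds (dt g2) (T u) u)).
  { intros u Hu. rewrite (HDT u Hu). exact (chain Om (dt g2) T u (lT u) HO (Cinf_dt _ _ C2 2%nat) (HBOm u Hu) (HlT u Hu)). }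
  assert (Hq2 : exists X, is_derive (fun v => dt (dt g2) (T v) v * Derive T v + ds (dt g2) (T v) v) s0 X).
  { eexists. apply isd_plus. apply isd_mult.
    exact (chain Om (dt (dt g2)) T s0 (lT s0) HO (Cinf_dt _ _ (Cinf_dt _ _ C2) 2%nat) (HBOm s0 Hs00) (HlT s0 Hs00)).
    exact (HT2 s0 Hs00).
    exact (chain Om (ds (dt g2)) T s0 (lT s0) HO (Cinf_ds _ _ (Cinf_dt _ _ C2) 2%nat) (HBOm s0 Hs00) (HlT s0 Hs00)). }
  destruct Hq2 as [X2 HX2].
  assert (Hd2_2 : forall u, Rabs (u - s0) < eps -> is_derive (Derive (crv2 T g)) u
     ((dt (dt g2) (T u) u * Derive T u + ds (dt g2) (T u) u) * Derive T u + dt g2 (T u) u * Derive_n T 2 u)).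
  { intros u Hu. apply (is_derive_ext_loc (fun v => dt g2 (T v) v * Derive T v)).
    - eapply filter_imp; [|apply (loc_ball s0 eps u Hu)]. intros v Hv.
      rewrite (is_derive_unique _ _ _ (Hc2 v Hv)), (HDT v Hv). reflexivity.
    - apply (isd_mult (fun v => dt g2 (T v) v) (Derive T)). apply Hcc2, Hu. apply HT2, Hu. }
  assert (Hn2_2 : Derive_n (crv2 T g) 2 s0 = dt g2 t0 s0 * Derive_n T 2 s0).
  { change (Derive (Derive (crv2 T g)) s0 = dt g2 t0 s0 * Derive_n T 2 s0).
    rewrite (is_derive_unique _ _ _ (Hd2_2 s0 Hs00)). rewrite HD0', HTs0. ring. }
  assert (Hn3_2 : Derive_n (crv2 T g) 3 s0 = 2 * (ds (dt g2) t0 s0 * Derive_n T 2 s0) + dt g2 t0 s0 * Derive_n T 3 s0).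
  { change (Derive (Derive_n (crv2 T g) 2) s0 = 2 * (ds (dt g2) t0 s0 * Derive_n T 2 s0) + dt g2 t0 s0 * Derive_n T 3 s0).
    assert (D := isd_plus _ _ s0 _ _ (isd_mult _ _ s0 _ _ HX2 (HT2 s0 Hs00))
                  (isd_mult _ _ s0 _ _ (Hcc2 s0 Hs00) (HDn 2%nat s0 Hs00))). cbv beta in D.
    assert (L : @locally R_UniformSpace s0 (fun v => (dt (dt g2) (T v) v * Derive T v + ds (dt g2) (T v) v) * Derive T v + dt g2 (T v) v * Derive_n T 2 v = Derive_n (crv2 T g) 2 v)).
    { eapply filter_imp; [|apply (loc_ball s0 eps s0 Hs00)]. intros v Hv. symmetry. exact (is_derive_unique _ _ _ (Hd2_2 v Hv)). }
    rewrite (is_derive_unique _ _ _ (is_derive_ext_loc _ _ _ _ L D)).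
    rewrite HD0', HTs0. ring. }
    assert (Hsss : dt (ds g1) t0 s0 * Derive_n T 2 s0 + ds (ds (ds g1)) t0 s0 = 0 /\
                   dt (ds g2) t0 s0 * Derive_n T 2 s0 + ds (ds (ds g2)) t0 s0 = 0).
    { split.
      - assert (D := isd_plus _ _ s0 _ _ (isd_mult _ (Derive T) s0 _ _
          (chain Om (dt (ds g1)) T s0 (lT s0) HO (Cinf_dt _ _ (Cinf_ds _ _ C1) 2%nat) (HBOm s0 Hs00) (HlT s0 Hs00))
          (HT2 s0 Hs00))
          (chain Om (ds (ds g1)) T s0 (lT s0) HO (Cinf_ds _ _ (Cinf_ds _ _ C1) 2%nat) (HBOm s0 Hs00) (HlT s0 Hs00))).
        assert (L : @locally R_UniformSpace s0 (fun u => dt (ds g1) (T u) u * Derive T u + ds (ds g1) (T u) u = 0)).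
        { eapply filter_imp; [|apply (loc_ball s0 eps s0 Hs00)]. intros u Hu.
          rewrite (HDT u Hu). apply Hid, Hu. }
        assert (DZ := deriv_zero_loc _ s0 _ L D). cbv beta in DZ.
        rewrite HD0', Hl0, HTs0 in DZ. lra.
      - assert (D := isd_plus _ _ s0 _ _ (isd_mult _ (Derive T) s0 _ _
          (chain Om (dt (ds g2)) T s0 (lT s0) HO (Cinf_dt _ _ (Cinf_ds _ _ C2) 2%nat) (HBOm s0 Hs00) (HlT s0 Hs00))
          (HT2 s0 Hs00))
          (chain Om (ds (ds g2)) T s0 (lT s0) HO (Cinf_ds _ _ (Cinf_ds _ _ C2) 2%nat) (HBOm s0 Hs00) (HlT s0 Hs00))).
        assert (L : @locally R_UniformSpace s0 (fun u => dt (ds g2) (T u) u * Derive T u + ds (ds g2) (T u) u = 0)).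
        { eapply filter_imp; [|apply (loc_ball s0 eps s0 Hs00)]. intros u Hu.
          rewrite (HDT u Hu). apply Hid, Hu. }
        assert (DZ := deriv_zero_loc _ s0 _ L D). cbv beta in DZ.
        rewrite HD0', Hl0, HTs0 in DZ. lra. }
    assert (HT2nz : Derive_n T 2 s0 <> 0).
    { intro E. rewrite E in Hsss. apply Hk2. lra. }
    destruct (cont_eps (Derive_n T 2) s0 (ex_intro _ _ (HDn 2%nat s0 Hs00)) (Rabs (Derive_n T 2 s0))
       (Rabs_pos_lt _ HT2nz)) as [d [Hd Hdd]].
    set (e' := Rmin eps d).
    assert (He'0 : 0 < e') by (apply Rmin_pos; auto).
    assert (He'e : e' <= eps) by apply Rmin_l.
    assert (He'd : e' <= d) by apply Rmin_r.
    assert (Hsgn : forall s, Rabs (s - s0) < e' -> 0 < Derive_n T 2 s * Derive_n T 2 s0).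
    { intros s Hs. assert (H := Hdd s ltac:(lra)). apply Rabs_lt_between in H.
      destruct (Rlt_or_le 0 (Derive_n T 2 s0)) as [P|P].
      - rewrite Rabs_pos_eq in H by lra. nra.
      - rewrite Rabs_left1 in H by lra. nra. }
    assert (HTb : forall x, Rabs (x - s0) < e' -> is_derive T x (Derive T x)).
    { intros x Hx. rewrite (HDT x ltac:(lra)). apply HlT. lra. }
    assert (HT2b : forall x, Rabs (x - s0) < e' -> is_derive (Derive T) x (Derive_n T 2 x)).
    { intros x Hx. apply HT2. lra. }
    assert (HA : Derive_n T 2 s0 < 0 -> forall s, Rabs (s - s0) < e' ->
                 (s < s0 -> 0 < Derive T s) /\ (s0 < s -> Derive T s < 0)).
    { intros N s Hs.
      destruct (sign_side (fun x => - Derive T x) (fun x => - Derive_n T 2 x) s0 e' He'0) with (s := s)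
        as [L R]; auto.
      - intros x Hx. split. apply isd_opp, HT2b, Hx. specialize (Hsgn x Hx). nra.
      - rewrite HD0'; ring.
      - split; intros; [specialize (L H)|specialize (R H)]; lra. }
    assert (HBc : 0 < Derive_n T 2 s0 -> forall s, Rabs (s - s0) < e' ->
                 (s < s0 -> Derive T s < 0) /\ (s0 < s -> 0 < Derive T s)).
    { intros N s Hs.
      apply (sign_side (Derive T) (Derive_n T 2) s0 e' He'0); auto.
      intros x Hx. split. apply HT2b, Hx. specialize (Hsgn x Hx). nra. }
    assert (Dnz : forall s, Rabs (s - s0) < e' -> s <> s0 -> Derive T s <> 0).
    { intros s Hs Hne. destruct (Rlt_or_le (Derive_n T 2 s0) 0) as [N|N].
      - destruct (HA N s Hs) as [L R]. destruct (Rtotal_order s s0) as [X|[X|X]].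
        + specialize (L X); lra. + tauto. + specialize (R X); lra.
      - assert (N' : 0 < Derive_n T 2 s0) by lra.
        destruct (HBc N' s Hs) as [L R]. destruct (Rtotal_order s s0) as [X|[X|X]].
        + specialize (L X); lra. + tauto. + specialize (R X); lra. }
    assert (Hipv : ds (ds (ds g1)) t0 s0 * dt (ds g1) t0 s0 + ds (ds (ds g2)) t0 s0 * dt (ds g2) t0 s0
                   = - Derive_n T 2 s0 * K2 t0 s0).
    { unfold K2. destruct Hsss as [A B].
      replace (ds (ds (ds g1)) t0 s0) with (- (dt (ds g1) t0 s0 * Derive_n T 2 s0)) by lra.
      replace (ds (ds (ds g2)) t0 s0) with (- (dt (ds g2) t0 s0 * Derive_n T 2 s0)) by lra. ring. }
    exists e'. split; [exact He'0|]. split; [exact He'e|].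
    split.
    { intros s Hs Hne. assert (Hs' : Rabs (s - s0) < eps) by lra.
      unfold plane_cusp. split.
      - unfold singular. rewrite E_s, pair0. apply Hsing, Hs'.
      - rewrite E_ss, E_sss. unfold det2. simpl.
        destruct (Hsing s Hs') as [A B]. destruct (SF _ _ (HBOm s Hs') A B) as [S1' [S2' S4']].
        rewrite <- (schwarz_C Om g1 (T s) s HO C1 (HBOm s Hs')),
                <- (schwarz_C Om g2 (T s) s HO C2 (HBOm s Hs')) in S4'.
        destruct (Hid s Hs') as [I1 I2].
        assert (Hl : lT s <> 0) by (rewrite <- (HDT s Hs'); apply Dnz; auto).
        destruct (HB s Hs') as [[_ HK2s] _]. simpl in HK2s. unfold K2 in HK2s.
        generalize (alg_perp (dt g1 (T s) s) (dt g2 (T s) s) (dt (ds g1) (T s) s) (dt (ds g2) (T s) s)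
                      (ds (ds (ds g1)) (T s) s) (ds (ds (ds g2)) (T s) s) S1' ltac:(lra)).
        set (a1 := dt (ds g1) (T s) s) in *. set (a2 := dt (ds g2) (T s) s) in *.
        set (v1 := ds (ds (ds g1)) (T s) s) in *. set (v2 := ds (ds (ds g2)) (T s) s) in *.
        set (l := lT s) in *.
        replace (ds (ds g1) (T s) s) with (- (a1 * l)) in * by lra.
        replace (ds (ds g2) (T s) s) with (- (a2 * l)) in * by lra.
        set (w := dt g1 (T s) s * v1 + dt g2 (T s) s * v2) in *.
        assert (Hw : w = 2 * l * (a1 * a1 + a2 * a2)) by lra.
        intros P E.
        assert (Q : a1 * v2 - a2 * v1 = 0).
        { apply (Rmult_eq_reg_l (- l)); [|intro; apply Hl; lra].
          replace (- l * (a1 * v2 - a2 * v1)) with (- (a1 * l) * v2 - - (a2 * l) * v1) by ring.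
          rewrite E. ring. }
        rewrite Q, Hw in P.
        assert (0 < (a1 * a1 + a2 * a2) * (2 * l * (a1 * a1 + a2 * a2)) ^ 2).
        { apply Rmult_lt_0_compat; auto.
          assert (Hx : 2 * l * (a1 * a1 + a2 * a2) <> 0).
          { apply Rmult_integral_contrapositive_currified; [|lra].
            apply Rmult_integral_contrapositive_currified; lra. }
          apply Rsqr_pos_lt in Hx. unfold Rsqr in Hx. simpl. lra. }
        lra. }
    split.
    { intros Hip s Hs Hne. rewrite Hipv in Hip. unfold K2 in HK20.
      assert (N : Derive_n T 2 s0 < 0) by nra.
      rewrite <- HTs0.
      apply (extremum T (Derive T) s0 e'); auto.
      - intros x Hx Hlt. apply (HA N x Hx), Hlt.
      - intros x Hx Hlt. apply (HA N x Hx), Hlt. }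
    split.
    { intros Hip s Hs Hne. rewrite Hipv in Hip. unfold K2 in HK20.
      assert (N : 0 < Derive_n T 2 s0) by nra.
      rewrite <- HTs0.
      assert (X : - T s < - T s0).
      { apply (extremum (fun x => - T x) (fun x => - Derive T x) s0 e'); auto.
        - intros x Hx. apply isd_opp, HTb, Hx.
        - rewrite HD0'; ring.
        - intros x Hx Hlt. destruct (HBc N x Hx) as [L _]. specialize (L Hlt). lra.
        - intros x Hx Hlt. destruct (HBc N x Hx) as [_ R]. specialize (R Hlt). lra. }
      lra. }
    split; [exact Dnz|].
    unfold spacetime_cusp. split; [unfold crv0; exact HD0'|].
    split; [rewrite (is_derive_unique _ _ _ (Hc1 s0 Hs00)), Hl0; ring|].
    split; [rewrite (is_derive_unique _ _ _ (Hc2 s0 Hs00)), Hl0; ring|].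
    intros a b Ea Eb Ec. unfold crv0 in Ea.
    rewrite Hn2_1, Hn3_1 in Eb. rewrite Hn2_2, Hn3_2 in Ec.
    rewrite <- (schwarz_C Om g1 t0 s0 HO C1 H0) in Eb.
    rewrite <- (schwarz_C Om g2 t0 s0 HO C2 H0) in Ec.
    assert (F1 : b * dt (ds g1) t0 s0 * Derive_n T 2 s0 = 0).
    { assert (Ea1 : dt g1 t0 s0 * (a * Derive_n T 2 s0 + b * Derive_n T 3 s0) = 0) by (rewrite Ea; ring).
      lra. }
    assert (F2 : b * dt (ds g2) t0 s0 * Derive_n T 2 s0 = 0).
    { assert (Ea2 : dt g2 t0 s0 * (a * Derive_n T 2 s0 + b * Derive_n T 3 s0) = 0) by (rewrite Ea; ring).
      lra. }
    assert (Hb : b = 0).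
    { destruct (Req_dec b 0) as [Z|Z]; auto. exfalso. apply Hts0. split.
      - apply (Rmult_eq_reg_l (b * Derive_n T 2 s0)). rewrite Rmult_0_r. rewrite <- F1. ring.
        intro X; apply Rmult_integral in X; tauto.
      - apply (Rmult_eq_reg_l (b * Derive_n T 2 s0)). rewrite Rmult_0_r. rewrite <- F2. ring.
        intro X; apply Rmult_integral in X; tauto. }
    subst b. split; auto.
    rewrite Rmult_0_l, Rplus_0_r in Ea. apply Rmult_integral in Ea. tauto. }
  destruct (classic (pdv (Ds :: Ds :: nil) g t0 s0 = (0, 0) /\ pdv (Ds :: Ds :: Ds :: nil) g t0 s0 <> (0, 0)))
    as [[Hk1 Hk2]|Hc].
  - destruct (Cusp Hk1 Hk2) as [e' [He' [Hee Hconc]]]. exists e', r, T.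
    split; [exact He'|]. split; [exact Hr0|].
    split; [intros t s Ht Hs; apply B1; auto; lra|].
    split; [exact HTs0|].
    split; [intros s Hs; apply B2; lra|].
    split; [intros n s Hs; apply B3; lra|].
    split; [intros s Hs; apply B4; lra|].
    split; [intros t s Ht Hs; apply B5; auto; lra|].
    split; [intros s Hs; apply B6; lra|].
    intros _ _. exact Hconc.
  - exists eps, r, T.
    split; [exact He0|]. split; [exact Hr0|].
    split; [exact B1|]. split; [exact HTs0|]. split; [exact B2|]. split; [exact B3|].
    split; [exact B4|]. split; [exact B5|]. split; [exact B6|].
    intros A B. exfalso. apply Hc; auto.
Qed.
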